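(* Let $S$ be an algebraic semigroup over an algebraically closed field $k$ and let $x \in S$. For $m>0$ let $\langle x^m \rangle$ denote the closure in $S$ of the set $\{x^{mj} : j > 0\}$. Assume that $S = \langle x \rangle = \langle x^n \rangle$ for all $n > 0$. Then $xS$ is dense in $S$, and $S$ is irreducible.
   Context: An algebraic semigroup is an algebraic variety over $k$ with an associative multiplication that is a morphism of varieties. Closures are taken in the Zariski topology. *)

(* Defs.v *)
From HB Require Import structures.
From mathcomp Require Import all_boot all_order all_algebra.
From mathcomp Require Import mpoly.
Set Implicit Arguments. Unset Strict Implicit. Unset Printing Implicit Defensive.
Import GRing.Theory.
Local Open Scope ring_scope.

Section Varieties.
Variable k : closedFieldType.

Definition kn (n : nat) := 'I_n -> k.

Definition zclosed (n : nat) (A : kn n -> Prop) : Prop :=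
  exists P : {mpoly k[n]} -> Prop,
    forall v, A v <-> (forall p, P p -> p.@[v] = 0).

Definition zopen (n : nat) (A : kn n -> Prop) : Prop :=
  zclosed (fun v => ~ A v).

Definition rel_open (n : nat) (V O : kn n -> Prop) : Prop :=
  exists W, zopen W /\ forall v, O v <-> (V v /\ W v).

Definition regular_fun (n : nat) (O : kn n -> Prop) (f : kn n -> k) : Prop :=
  forall x, O x -> exists W : kn n -> Prop, exists p q : {mpoly k[n]},
    [/\ zopen W, W x &
        forall y, O y -> W y -> q.@[y] != 0 /\ f y * q.@[y] = p.@[y]].

Definition regular_map (n m : nat) (O : kn n -> Prop) (g : kn n -> kn m) :=
  forall j : 'I_m, regular_fun O (fun v => g v j).

Definition kconcat (a b : nat) (u : kn a) (w : kn b) : kn (a + b) :=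
  fun t => match split t with inl i => u i | inr j => w j end.

(* An algebraic variety structure on a type S, given by a finite atlas of
   affine charts (bijections of subsets U_i onto Zariski-closed subsets of
   k^(dim i)) with open overlaps, regular transition maps, and the
   separatedness condition (the graph of each gluing is closed). *)
Definition chimg (S : Type) (n : nat) (U : S -> Prop) (c : S -> kn n)
  : kn n -> Prop := fun v => exists2 s, U s & c s = v.

Local Unset Implicit Arguments.
Record variety (S : Type) := Variety {
  ncharts : nat;
  cdim : 'I_ncharts -> nat;
  cdom : 'I_ncharts -> S -> Prop;
  chart : forall i, S -> kn (cdim i);
  cimg_closed : forall i, zclosed (chimg (cdom i) (chart i));
  chart_inj : forall i s t, cdom i s -> cdom i t -> chart i s = chart i t -> s = t;
  cdom_cover : forall s, exists i, cdom i s;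
  overlap_open : forall i j,
    rel_open (chimg (cdom i) (chart i)) (fun v => exists s, [/\ cdom i s, cdom j s & chart i s = v]);
  transition_regular : forall i j, exists g : kn (cdim i) -> kn (cdim j),
    regular_map (fun v => exists s, [/\ cdom i s, cdom j s & chart i s = v]) g /\
    (forall s, cdom i s -> cdom j s -> g (chart i s) = chart j s);
  separated : forall i j,
    zclosed (fun v => exists s, [/\ cdom i s, cdom j s &
                                  kconcat (chart i s) (chart j s) = v])
}.
Local Set Implicit Arguments.
Arguments ncharts {S} _.
Arguments cdim {S} _ _.
Arguments cdom {S} _ _ _.
Arguments chart {S} _ _ _ _.

Variables (S : Type) (X : variety S).

Definition vopen (W : S -> Prop) : Prop :=
  forall i, rel_open (chimg (cdom X i) (chart X i))
    (fun v => exists s, [/\ cdom X i s, W s & chart X i s = v]).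

Definition vclosed (C : S -> Prop) : Prop := vopen (fun s => ~ C s).

Definition vclosure (A : S -> Prop) : S -> Prop :=
  fun s => forall C, vclosed C -> (forall t, A t -> C t) -> C s.

Definition vdense (A : S -> Prop) : Prop := forall s, vclosure A s.

Definition virreducible : Prop :=
  (exists s : S, True) /\
  forall C1 C2, vclosed C1 -> vclosed C2 -> (forall s, C1 s \/ C2 s) ->
    (forall s, C1 s) \/ (forall s, C2 s).

(* product charts of S x S: (U_i x U_j) -> closed subset of k^(dim i + dim j) *)
Local Unset Implicit Arguments.
Definition pimg (i j : 'I_(ncharts X)) (P : S -> S -> Prop)
  : kn (cdim X i + cdim X j) -> Prop :=
  fun v => exists s t, [/\ cdom X i s, cdom X j t, P s t &
                          kconcat (chart X i s) (chart X j t) = v].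

Local Set Implicit Arguments.
(* mu : S x S -> S is a morphism of varieties: continuous for the Zariski
   topology of the product variety, and given by regular maps in charts *)
Definition vmorphism2 (mu : S -> S -> S) : Prop :=
  (forall W, vopen W -> forall i j,
      rel_open (pimg i j (fun _ _ => True)) (pimg i j (fun s t => W (mu s t)))) /\
  (forall i j l, exists g : kn (cdim X i + cdim X j) -> kn (cdim X l),
      regular_map (pimg i j (fun s t => cdom X l (mu s t))) g /\
      (forall s t, cdom X i s -> cdom X j t -> cdom X l (mu s t) ->
         g (kconcat (chart X i s) (chart X j t)) = chart X l (mu s t))).

End Varieties.

Definition algebraic_semigroup (k : closedFieldType) (S : Type)
  (X : variety k S) (mu : S -> S -> S) : Prop :=
  associative mu /\ vmorphism2 X mu.

(* x^m for m > 0 (x^m = mu x (mu x ... x), m factors) *)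
Definition spow (S : Type) (mu : S -> S -> S) (x : S) (m : nat) : S :=
  iter m.-1 (mu x) x.

Definition cyc_closure (k : closedFieldType) (S : Type) (X : variety k S)
  (mu : S -> S -> S) (x : S) (m : nat) : S -> Prop :=
  vclosure X (fun s => exists2 j, (0 < j)%N & s = spow mu x (m * j)).

(* Main.v *)
Require Import Defs.
From mathcomp Require Import all_boot all_order all_algebra.
From HB Require Import structures.
From mathcomp Require Import mpoly zify.
From Stdlib Require Import Classical ClassicalEpsilon FunctionalExtensionality PropExtensionality.
Set Implicit Arguments. Unset Strict Implicit. Unset Printing Implicit Defensive.
Import Order.TTheory GRing.Theory.


Lemma min_exists (P : nat -> Prop) : (exists v, P v) -> exists v, P v /\ forall w, P w -> (v <= w)%N.
Proof.
case=> v Pv; elim: v {-2}v (leqnn v) Pv => [|N IH] v vN Pv.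
  exists v; split=> // w _; move: vN; rewrite leqn0 => /eqP->; done.
case: (classic (exists w, (w <= N)%N /\ P w)) => [[w [wN Pw]]|nw]; first exact: (IH w).
exists v; split=> // w Pw; rewrite leqNgt; apply/negP => wv.
apply: nw; exists w; split=> //; by rewrite -ltnS (leq_trans wv).
Qed.

Lemma nat_subseq (f : nat -> nat) : exists phi : nat -> nat,
  (forall i j, (i < j)%N -> (phi i < phi j)%N) /\
  (forall i j, (i <= j)%N -> (f (phi i) <= f (phi j))%N).
Proof.
have g_ex : forall a, exists b, (a < b)%N /\ forall c, (a < c)%N -> (f b <= f c)%N.
  move=> a.
  have ex : exists v, exists2 b, (a < b)%N & f b = v by exists (f a.+1), a.+1.
  case: (min_exists ex) => v [[b ab fb] Hmin].
  exists b; split=> // c ac; rewrite fb; apply: Hmin; by exists c.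
pose g a := proj1_sig (constructive_indefinite_description _ (g_ex a)).
have gP a : (a < g a)%N /\ forall c, (a < c)%N -> (f (g a) <= f c)%N.
  by rewrite /g; case: constructive_indefinite_description.
pose phi j := iter j.+1 g 0.
have step : forall a, (phi a < phi a.+1)%N.
  move=> a; rewrite /phi /=; by case: (gP (g (iter a g 0))).
have inc : forall i j, (i < j)%N -> (phi i < phi j)%N.
  move=> i j; elim: j => // j IH; rewrite ltnS leq_eqVlt => /orP[/eqP->|/IH h].
    exact: step.
  exact: (ltn_trans h (step j)).
exists phi; split=> // i j; rewrite leq_eqVlt => /orP[/eqP->//|/inc h].
have -> : phi i = g (iter i g 0) by [].
case: (gP (iter i g 0)) => g1 g2; apply: g2.
apply: ltn_trans g1 h.
Qed.

Lemma dickson n (m : nat -> 'X_{1..n}) : exists i j, (i < j)%N /\ (m i <= m j)%MM.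
Proof.
have H : forall t, (t <= n)%N -> exists phi : nat -> nat,
  (forall i j, (i < j)%N -> (phi i < phi j)%N) /\
  (forall i j (c : 'I_n), (i <= j)%N -> (c < t)%N -> (m (phi i) c <= m (phi j) c)%N).
  elim=> [_|t IH tn].
    by exists id; split=> // i j c _.
  case: (IH (ltnW tn)) => phi [phiI phiM].
  case: (nat_subseq (fun j => m (phi j) (Ordinal tn))) => psi [psiI psiM].
  exists (fun j => phi (psi j)); split.
    by move=> i j ij; apply/phiI/psiI.
  move=> i j c ij; rewrite ltnS leq_eqVlt => /orP[/eqP ct|ct].
    have -> : c = Ordinal tn by apply: val_inj.
    exact: psiM.
  apply: phiM ct; move: ij; rewrite leq_eqVlt => /orP[/eqP->//|/psiI]; exact: ltnW.
case: (H n (leqnn n)) => phi [phiI phiM].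
exists (phi 0), (phi 1); split; first exact: phiI.
by apply/mnm_lepP => c; apply: phiM.
Qed.


Lemma chain_mono (A : Type) (V : nat -> A -> Prop) :
  (forall k a, V k a -> V k.+1 a) -> forall i j, (i <= j)%N -> forall a, V i a -> V j a.
Proof.
move=> H i j ij; rewrite -(subnKC ij); elim: (j - i)%N => [|d IH] a; first by rewrite addn0.
by rewrite addnS => /IH /H.
Qed.

Section Ideals.
Variable F : fieldType.
Local Open Scope ring_scope.

Definition is_ideal n (I : {mpoly F[n]} -> Prop) :=
  [/\ I 0, (forall p q, I p -> I q -> I (p + q)) & (forall r p, I p -> I (r * p))].

Definition LM n (I : {mpoly F[n]} -> Prop) (m : 'X_{1..n}) :=
  exists q, [/\ I q, q != 0 & mlead q = m].

Lemma div_lemma n (I J : {mpoly F[n]} -> Prop) : is_ideal I -> is_ideal J ->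
  (forall p, I p -> J p) ->
  (forall m, LM J m -> LM I m) -> forall p, J p -> I p.
Proof.
move=> [I0 ID IM] [J0 JD JM] IJ HLM p; elim/mleadrect: p => p IH Jp.
have [->|pn0] := eqVneq p 0; first exact: I0.
case: (HLM (mlead p)); first by exists p.
move=> q [Iq qn0 qp].
pose c := mleadc p / mleadc q.
have qc : mleadc q != 0 by rewrite mleadc_eq0.
pose p' := p - c *: q.
have Jp' : J p'.
  rewrite /p' -mul_mpolyC -mulN1r mulrA; apply: JD => //; apply: JM; exact: IJ.
have Ip : I p' -> I p.
  move=> Ip'; have -> : p = p' + c%:MP * q by rewrite /p' mul_mpolyC subrK.
  apply: ID => //; exact: IM.
apply: Ip; have [->|p'n0] := eqVneq p' 0; first exact: I0.
apply: IH Jp'.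
have le : (mlead p' <= mlead p)%O.
  apply: (le_trans (mleadB_le _ _)); rewrite leUx lexx /=.
  by apply: (le_trans (mleadZ_le _ _)); rewrite qp.
rewrite lt_neqAle le andbT; apply/eqP => e.
move: p'n0; rewrite -mleadc_eq0 e /p' mcoeffB mcoeffZ -qp /c.
by rewrite divfK // qp subrr eqxx.
Qed.

Lemma no_strict_ideals n (I : nat -> {mpoly F[n]} -> Prop) :
  (forall k, is_ideal (I k)) -> (forall k p, I k p -> I k.+1 p) ->
  ~ (forall k, exists p, I k.+1 p /\ ~ I k p).
Proof.
move=> Iid Imono Hs.
have HLM : forall k, exists m, LM (I k.+1) m /\ ~ LM (I k) m.
  move=> k; apply: NNPP => nH.
  case: (Hs k) => p [Ip nIp]; apply: nIp.
  apply: (div_lemma (Iid k) (Iid k.+1) (Imono k)) Ip => m Lm.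
  apply: NNPP => nL; apply: nH; by exists m.
pose m k := proj1_sig (constructive_indefinite_description _ (HLM k)).
have mP k : LM (I k.+1) (m k) /\ ~ LM (I k) (m k).
  by rewrite /m; case: constructive_indefinite_description.
case: (dickson m) => i [j [ij mij]].
case: (mP j) => _; apply.
case: (mP i) => [[q [Iq qn0 qm]] _].
exists ('X_[(m j - m i)%MM] * q); split.
- case: (Iid j) => _ _ HM; apply: HM; exact: (chain_mono Imono ij).
- rewrite mulf_eq0 negb_or qn0 andbT -msupp_eq0 msuppX //.
- rewrite mleadM ?mleadXm ?qm ?submK //.
  by rewrite -msupp_eq0 msuppX.
Qed.

End Ideals.


Lemma stab_of_nostrict (A : Type) (P : (A -> Prop) -> Prop) :
  (forall V : nat -> A -> Prop, (forall k, P (V k)) -> (forall k a, V k.+1 a -> V k a) ->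
     ~ (forall k, exists a, V k a /\ ~ V k.+1 a)) ->
  forall V : nat -> A -> Prop, (forall k, P (V k)) -> (forall k a, V k.+1 a -> V k a) ->
  exists K, forall k, (K <= k)%N -> forall a, V K a -> V k a.
Proof.
move=> NS V PV dec; apply: NNPP => nst.
have h : forall K, exists k, (K <= k)%N /\ exists a, V K a /\ ~ V k a.
  move=> K; apply: NNPP => nh; apply: nst; exists K => k Kk a VKa.
  apply: NNPP => nVk; apply: nh; exists k; split=> //; by exists a.
pose g K := proj1_sig (constructive_indefinite_description _ (h K)).
have gP K : (K <= g K)%N /\ exists a, V K a /\ ~ V (g K) a.
  by rewrite /g; case: constructive_indefinite_description.
have decr : forall i j, (i <= j)%N -> forall a, V j a -> V i a.
  move=> i j ij; rewrite -(subnKC ij); elim: (j - i)%N => [|d IH] a; first by rewrite addn0.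
  by rewrite addnS => /dec /IH.
apply: (NS (fun j => V (iter j g 0))) => [k|k a|k]; first exact: PV.
  rewrite /= => Va; apply: (decr _ _ _ _ Va); by case: (gP (iter k g 0)).
case: (gP (iter k g 0)) => _ [a [Va nVa]]; by exists a.
Qed.

Section Top.
Variable k : closedFieldType.
Local Open Scope ring_scope.

Definition IV n (V : kn k n -> Prop) (p : {mpoly k[n]}) := forall w, V w -> p.@[w] = 0.

Lemma zclosed_ideal n (V : kn k n -> Prop) : zclosed V ->
  forall v, V v <-> (forall p, IV V p -> p.@[v] = 0).
Proof.
case=> P HP v; split; first by move=> Vv p; apply.
move=> H; apply/HP => p Pp; apply: H => w /HP; exact.
Qed.

Lemma IV_ideal n (V : kn k n -> Prop) : is_ideal (IV V).
Proof.
split=> [w _|p q Hp Hq w Vw|r p Hp w Vw]; first by rewrite meval0.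
  by rewrite mevalD Hp ?Hq ?addr0.
by rewrite mevalM Hp ?mulr0.
Qed.

Lemma no_strict_zclosed n : forall V : nat -> kn k n -> Prop,
  (forall j, zclosed (V j)) -> (forall j a, V j.+1 a -> V j a) ->
  ~ (forall j, exists a, V j a /\ ~ V j.+1 a).
Proof.
move=> V Vc dec Hs.
apply: (@no_strict_ideals k n (fun j => IV (V j))).
- move=> j; exact: IV_ideal.
- move=> j p Hp w Vw; apply: Hp; exact: dec.
move=> j; case: (Hs j) => a [Va nVa].
have : ~ (forall p, IV (V j.+1) p -> p.@[a] = 0) by move=> h; apply: nVa; apply/(zclosed_ideal (Vc j.+1)).
move=> nh; apply: NNPP => nex; apply: nh => p Ip; apply: NNPP => pa.
apply: nex; exists p; split=> // Ip'; apply: pa; exact: Ip'.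
Qed.

Lemma zclosedI n (A B : kn k n -> Prop) : zclosed A -> zclosed B -> zclosed (fun v => A v /\ B v).
Proof.
case=> P HP [Q HQ]; exists (fun p => P p \/ Q p) => v; split.
  by case=> /HP Av /HQ Bv p [/Av|/Bv].
by move=> H; split; [apply/HP|apply/HQ] => p Hp; apply: H; [left|right].
Qed.

Variables (S : Type) (X : variety k S).
Local Notation dom := (cdom k S X).
Local Notation ch := (chart k S X).
Local Notation nch := (ncharts k S X).
Local Notation dim := (cdim k S X).

Definition Zimg (i : 'I_nch) (C : S -> Prop) : kn k (dim i) -> Prop :=
  fun v => exists s, [/\ dom i s, C s & ch i s = v].
Arguments Zimg : clear implicits.

Lemma Zimg_closed (i : 'I_nch) (C : S -> Prop) : vclosed X C -> zclosed (Zimg i C).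
Proof.
move=> /(_ i) [W [Wo HW]].
have -> : Zimg i C = fun v => chimg (dom i) (ch i) v /\ ~ W v.
  apply: functional_extensionality => v; apply: propositional_extensionality; split.
    case=> s [ds Cs <-]; split; first by exists s.
    move=> /(conj (ex_intro2 _ _ s ds erefl : chimg (dom i) (ch i) (ch i s))) /HW.
    case=> s' [ds' nCs' e]; apply: nCs'; by rewrite (@chart_inj k S X _ _ _ ds' ds e).
  case=> [[s ds <-] nW]; exists s; split=> //; apply: NNPP => nC; apply: nW.
  have : exists s0, [/\ dom i s0, ~ C s0 & ch i s0 = ch i s] by exists s.
  by move/HW => [].
apply: zclosedI => //; exact: (@cimg_closed k S X i).
Qed.

Lemma vclosed_ext (A B : S -> Prop) : (forall s, A s <-> B s) -> vclosed X A -> vclosed X B.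
Proof.
move=> H; have -> // : A = B.
by apply: functional_extensionality => s; apply: propositional_extensionality.
Qed.

Lemma no_strict_vclosed : forall C : nat -> S -> Prop,
  (forall j, vclosed X (C j)) -> (forall j s, C j.+1 s -> C j s) ->
  ~ (forall j, exists s, C j s /\ ~ C j.+1 s).
Proof.
move=> C Cc dec Hs.
have Kex : forall i : 'I_nch, exists K, forall j, (K <= j)%N -> forall v,
    Zimg i (C K) v -> Zimg i (C j) v.
  move=> i; apply: (stab_of_nostrict (@no_strict_zclosed (dim i)) (V := fun j => Zimg i (C j))).
    move=> j; exact: Zimg_closed.
  by move=> j v [s [ds Cs e]]; exists s; split=> //; apply: dec.
pose Kf i := proj1_sig (constructive_indefinite_description _ (Kex i)).
have KfP i : forall j, (Kf i <= j)%N -> forall v, Zimg i (C (Kf i)) v -> Zimg i (C j) v.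
  by rewrite /Kf; case: constructive_indefinite_description.
pose K := (\max_(i < nch) Kf i)%N.
case: (Hs K) => s [CKs nCs].
case: (@cdom_cover k S X s) => i ds.
have decr : forall a b, (a <= b)%N -> forall t, C b t -> C a t.
  move=> a b ab; rewrite -(subnKC ab); elim: (b - a)%N => [|d IH] t; first by rewrite addn0.
  by rewrite addnS => /dec /IH.
have KiK : (Kf i <= K)%N by apply: (leq_bigmax_cond i).
have : Zimg i (C K.+1) (ch i s).
  apply: (KfP i); first by apply: leqW.
  exists s; split=> //; exact: (decr _ _ KiK).
case=> s' [ds' Cs' e]; apply: nCs; by rewrite -(@chart_inj k S X i s' s ds' ds e).
Qed.

Definition irr (Y : S -> Prop) := forall A B, vclosed X A -> vclosed X B ->
  (forall s, Y s -> A s \/ B s) -> (forall s, Y s -> A s) \/ (forall s, Y s -> B s).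

Lemma zclosedU n (A B : kn k n -> Prop) : zclosed A -> zclosed B -> zclosed (fun v => A v \/ B v).
Proof.
case=> P HP [Q HQ]; exists (fun r => exists p q, [/\ P p, Q q & r = p * q]) => v; split.
  case=> [/HP Av|/HQ Bv] r [p [q [Pp Qq ->]]]; rewrite mevalM.
    by rewrite (Av p Pp) mul0r.
  by rewrite (Bv q Qq) mulr0.
move=> H; apply: NNPP => nAB.
have [p [Pp pv]] : exists p, P p /\ p.@[v] <> 0.
  apply: NNPP => h; apply: nAB; left; apply/HP => p Pp; apply: NNPP => pv; apply: h; by exists p.
have [q [Qq qv]] : exists q, Q q /\ q.@[v] <> 0.
  apply: NNPP => h; apply: nAB; right; apply/HQ => q Qq; apply: NNPP => qv; apply: h; by exists q.
have := H (p * q); rewrite mevalM => /(_ (ex_intro _ p (ex_intro _ q (And3 Pp Qq erefl)))).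
by move/eqP; rewrite mulf_eq0 => /orP[/eqP|/eqP].
Qed.

Lemma vclosedU A B : vclosed X A -> vclosed X B -> vclosed X (fun s => A s \/ B s).
Proof.
move=> HA HB i; case: (HA i) => [W1 [W1o H1]]; case: (HB i) => [W2 [W2o H2]].
exists (fun v => W1 v /\ W2 v); split; first rewrite /zopen.
  have -> : (fun v => ~ (W1 v /\ W2 v)) = (fun v => ~ W1 v \/ ~ W2 v).
    apply: functional_extensionality => v; apply: propositional_extensionality; tauto.
  exact: zclosedU.
move=> v; split.
  case=> s [ds nAB e].
  have h1 : exists s, [/\ dom i s, ~ A s & ch i s = v] by exists s; split=> //; tauto.
  have h2 : exists s, [/\ dom i s, ~ B s & ch i s = v] by exists s; split=> //; tauto.
  move/H1: h1 => [c w1]; move/H2: h2 => [_ w2]; by split.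
case=> c [w1 w2].
case: (proj2 (H1 v) (conj c w1)) => s1 [d1 n1 e1].
case: (proj2 (H2 v) (conj c w2)) => s2 [d2 n2 e2].
have e : s1 = s2 by apply: (@chart_inj k S X i s1 s2 d1 d2); rewrite e1 e2.
exists s1; split=> //; subst s2; tauto.
Qed.

Lemma vclosedI A B : vclosed X A -> vclosed X B -> vclosed X (fun s => A s /\ B s).
Proof.
move=> HA HB i; case: (HA i) => [W1 [W1o H1]]; case: (HB i) => [W2 [W2o H2]].
exists (fun v => W1 v \/ W2 v); split; first rewrite /zopen.
  have -> : (fun v => ~ (W1 v \/ W2 v)) = (fun v => ~ W1 v /\ ~ W2 v).
    apply: functional_extensionality => v; apply: propositional_extensionality; tauto.
  exact: zclosedI.
move=> v; split.
  case=> s [ds nAB e].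
  case: (classic (A s)) => As.
    have h2 : exists s, [/\ dom i s, ~ B s & ch i s = v] by exists s; split=> //; tauto.
    by move/H2: h2 => [c w2]; split=> //; right.
  have h1 : exists s, [/\ dom i s, ~ A s & ch i s = v] by exists s; split=> //; tauto.
  by move/H1: h1 => [c w1]; split=> //; left.
case=> c [w1|w2].
  case: (proj2 (H1 v) (conj c w1)) => s1 [d1 n1 e1]; exists s1; split=> //; tauto.
case: (proj2 (H2 v) (conj c w2)) => s1 [d1 n1 e1]; exists s1; split=> //; tauto.
Qed.

Lemma vclosed0 : vclosed X (fun _ => False).
Proof.
move=> i; exists (fun _ => True); split.
  exists (fun p => p = 1) => v; split=> [[]//|/(_ 1 erefl)]; rewrite meval1 => /eqP.
  by rewrite oner_eq0.
move=> v; split; first by case=> s [ds _ <-]; split=> //; exists s.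
by case=> [[s ds <-] _]; exists s; split.
Qed.

Lemma vclosedT : vclosed X (fun _ => True).
Proof.
move=> i; exists (fun _ => False); split.
  by exists (fun _ => False) => v; split=> [_ p []|_ []].
by move=> v; split=> [[s [_ h _]]|[]] //; case: h.
Qed.

Lemma vclosed_fin r (A : 'I_r -> S -> Prop) : (forall l, vclosed X (A l)) ->
  vclosed X (fun s => exists l, A l s).
Proof.
elim: r A => [|r IH] A HA.
  by apply: (vclosed_ext _ vclosed0) => s; split=> // [[[]]].
have U := vclosedU (HA ord_max) (IH (fun l => A (widen_ord (leqnSn r) l)) (fun l => HA _)).
apply: (vclosed_ext _ U) => s; split.
  by case=> [h|[l h]]; [exists ord_max|exists (widen_ord (leqnSn r) l)].
case=> l h; have [e|ne] := eqVneq l ord_max; first by left; rewrite -e.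
right; have lr : (l < r)%N by rewrite -ltnS ltn_neqAle ltn_ord andbT; move: ne; rewrite -val_eqE.
exists (Ordinal lr); by have -> : widen_ord (leqnSn r) (Ordinal lr) = l by apply: val_inj.
Qed.

Lemma irr_fin r (Y : S -> Prop) (A : 'I_r -> S -> Prop) : irr Y ->
  (forall l, vclosed X (A l)) -> (0 < r)%N -> (forall s, Y s -> exists l, A l s) ->
  exists l, forall s, Y s -> A l s.
Proof.
move=> HY; elim: r A => [//|r IH] A HA _ Hc.
pose A' := fun l : 'I_r => A (widen_ord (leqnSn r) l).
case: (HY (A ord_max) (fun s => exists l, A' l s) (HA _) (vclosed_fin (fun l => HA _))).
- move=> s /Hc [l h]; have [e|ne] := eqVneq l ord_max; first by left; rewrite -e.
  right; have lr : (l < r)%N by rewrite -ltnS ltn_neqAle ltn_ord andbT; move: ne; rewrite -val_eqE.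
  exists (Ordinal lr); rewrite /A'; by have -> : widen_ord (leqnSn r) (Ordinal lr) = l by apply: val_inj.
- by move=> h; exists ord_max.
move=> h; case: (posnP r) => [r0|rpos].
  exists ord_max => s /h [l]; by subst r; case: l.
case: (IH A' (fun l => HA _) rpos h) => l hl; by exists (widen_ord (leqnSn r) l).
Qed.

End Top.


Section Cont.
Variable k : closedFieldType.
Local Open Scope ring_scope.

Lemma kconcat_inj a b (u u' : kn k a) (w w' : kn k b) :
  kconcat u w = kconcat u' w' -> u = u' /\ w = w'.
Proof.
move=> e; split; apply: functional_extensionality => i.
  have h : forall (u0 : kn k a) (w0 : kn k b), kconcat u0 w0 (unsplit (inl i)) = u0 i.
    by move=> u0 w0; rewrite /kconcat (unsplitK (inl i)).
  by rewrite -(h u w) -(h u' w') e.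
have h : forall (u0 : kn k a) (w0 : kn k b), kconcat u0 w0 (unsplit (inr i)) = w0 i.
  by move=> u0 w0; rewrite /kconcat (unsplitK (inr i)).
by rewrite -(h u w) -(h u' w') e.
Qed.

Lemma zclosed_slice a b (A : kn k (a + b) -> Prop) (c : kn k a) :
  zclosed A -> zclosed (fun v : kn k b => A (kconcat c v)).
Proof.
case=> P HP.
pose lq : (a + b).-tuple {mpoly k[b]} :=
  [tuple match split i with inl j => (c j)%:MP | inr j => 'X_j end | i < a + b].
have key : forall p v, (p \mPo lq).@[v] = p.@[kconcat c v].
  move=> p v; rewrite comp_mpoly_meval; apply: meval_eq => i.
  rewrite tnth_mktuple /kconcat; case: (split i) => j; by rewrite ?mevalC ?mevalXU.
exists (fun q => exists2 p, P p & q = p \mPo lq) => v; split.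
  by move/HP => h q [p Pp ->]; rewrite key; apply: h.
move=> h; apply/HP => p Pp; rewrite -key; apply: h; by exists p.
Qed.

Variables (S : Type) (X : variety k S).
Local Notation dom := (cdom k S X).
Local Notation ch := (chart k S X).
Local Notation nch := (ncharts k S X).
Local Notation dim := (cdim k S X).

Lemma Lx_closed (mu : S -> S -> S) (Hm : vmorphism2 X mu) (x : S) (C : S -> Prop) :
  vclosed X C -> vclosed X (fun t => C (mu x t)).
Proof.
move=> HC l; case: (@cdom_cover k S X x) => i dx.
case: ((proj1 Hm) (fun s => ~ C s) HC i l) => W [Wo HW].
exists (fun v => W (kconcat (ch i x) v)); split.
  exact: (zclosed_slice (A := fun v => ~ W v)).
move=> v; split.
  case=> t [dt nC <-]; split; first by exists t.
  have : pimg k S X i l (fun s t => ~ C (mu s t)) (kconcat (ch i x) (ch l t)).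
    by exists x, t; split.
  by move/HW => [].
case=> [[t dt <-] Wv].
have : pimg k S X i l (fun _ _ => True) (kconcat (ch i x) (ch l t)) by exists x, t; split.
move=> hp; case: (proj2 (HW _) (conj hp Wv)) => s' [t' [ds' dt' nC e]].
case: (kconcat_inj e) => e1 e2.
have -> : x = s' by apply: (@chart_inj k S X i); rewrite // e1.
have -> : t = t' by apply: (@chart_inj k S X l); rewrite // e2.
by exists t'; split.
Qed.

Definition good (C : S -> Prop) := exists r (Y : 'I_r -> S -> Prop),
  (forall l, vclosed X (Y l) /\ irr X (Y l)) /\ forall s, C s <-> exists l, Y l s.

Lemma bad_step C : vclosed X C -> ~ good C -> exists C', [/\ vclosed X C', ~ good C',
  (forall s, C' s -> C s) & exists s, C s /\ ~ C' s].
Proof.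
move=> Cc nG.
have nirr : ~ irr X C.
  move=> Ci; apply: nG; exists 1%N, (fun _ => C); split=> // s; split=> [Cs|[]//].
  by exists ord0.
have [A [B [Ac Bc cov [nA nB]]]] : exists A B, [/\ vclosed X A, vclosed X B,
    (forall s, C s -> A s \/ B s) & ~ (forall s, C s -> A s) /\ ~ (forall s, C s -> B s)].
  apply: NNPP => h; apply: nirr => A B Ac Bc cov.
  apply: NNPP => h2; apply: h; exists A, B; split=> //; tauto.
have [sA [CsA nsA]] : exists s, C s /\ ~ A s.
  apply: NNPP => h; apply: nA => s Cs; apply: NNPP => nAs; apply: h; by exists s.
have [sB [CsB nsB]] : exists s, C s /\ ~ B s.
  apply: NNPP => h; apply: nB => s Cs; apply: NNPP => nBs; apply: h; by exists s.
case: (classic (good (fun s => C s /\ A s))) => gA; last first.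
  exists (fun s => C s /\ A s); split=> //; [exact: vclosedI | by move=> s [] | exists sA; tauto].
case: (classic (good (fun s => C s /\ B s))) => gB; last first.
  exists (fun s => C s /\ B s); split=> //; [exact: vclosedI | by move=> s [] | exists sB; tauto].
exfalso; apply: nG.
case: gA => r1 [Y1 [HY1 E1]]; case: gB => r2 [Y2 [HY2 E2]].
exists (r1 + r2)%N, (fun l => match split l with inl a => Y1 a | inr b => Y2 b end).
split; first by move=> l; case: (split l).
move=> s; split.
  move=> Cs; case: (cov s Cs) => h.
    case: (proj1 (E1 s) (conj Cs h)) => a ya; exists (unsplit (inl a)); by rewrite unsplitK.
  case: (proj1 (E2 s) (conj Cs h)) => b yb; exists (unsplit (inr b)); by rewrite unsplitK.
case=> l; case: (split l) => [a ya|b yb].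
  by case: (proj2 (E1 s) (ex_intro _ a ya)).
by case: (proj2 (E2 s) (ex_intro _ b yb)).
Qed.

Lemma decomp C : vclosed X C -> good C.
Proof.
move=> Cc; apply: NNPP => nG.
have H : forall D, exists D', (vclosed X D /\ ~ good D) -> [/\ vclosed X D', ~ good D',
    (forall s, D' s -> D s) & exists s, D s /\ ~ D' s].
  move=> D; case: (classic (vclosed X D /\ ~ good D)) => [[Dc nD]|h].
    case: (bad_step Dc nD) => D' HD'; by exists D'.
  by exists D.
pose st D := proj1_sig (constructive_indefinite_description _ (H D)).
have stP D : (vclosed X D /\ ~ good D) -> [/\ vclosed X (st D), ~ good (st D),
    (forall s, st D s -> D s) & exists s, D s /\ ~ st D s].
  by rewrite /st; case: constructive_indefinite_description.
have inv : forall j, vclosed X (iter j st C) /\ ~ good (iter j st C).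
  elim=> [|j [IH1 IH2]] //=; by case: (stP _ (conj IH1 IH2)).
apply: (@no_strict_vclosed k S X (fun j => iter j st C)) => [j|j s|j].
- exact: (proj1 (inv j)).
- by case: (stP _ (inv j)) => _ _ h _; apply: h.
- by case: (stP _ (inv j)).
Qed.

End Cont.


Theorem lemma1 (k : closedFieldType) (S : Type) (X : variety k S)
  (mu : S -> S -> S) (HS : algebraic_semigroup X mu) (x : S)
  (Hx : forall n : nat, (0 < n)%N -> forall s : S, cyc_closure X mu x n s) :
  vdense X (fun s => exists t, s = mu x t) /\ virreducible X.
Proof.
case: HS => _ Hm.
pose f := mu x.
have spowE : forall m, spow mu x m.+1 = iter m f x by [].
split.
  move=> s C Cc HC; apply: (Hx 2 erefl s C Cc) => t [j j0 ->].
  case: j j0 => // j _; rewrite mulnS addSn spowE iterS; apply: HC; by eexists.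
split; first by exists x.
move=> C1 C2 C1c C2c cov.
case: (decomp (@vclosedT k S X)) => r [Y [HY EY]].
have cover : forall s, exists l, Y l s by move=> s; apply/EY.
have r_gt0 : (0 < r)%N.
  case: (cover x) => l _; case: l => m mr; exact: (leq_ltn_trans (leq0n m) mr).
have sig_ex : forall i, exists l, forall s, Y i s -> Y l (f s).
  move=> i; apply: (@irr_fin k S X r (Y i) (fun l s => Y l (f s))).
  - by case: (HY i).
  - move=> l; apply: (@Lx_closed k S X mu Hm x); by case: (HY l).
  - exact: r_gt0.
  - by move=> s _; apply: cover.
pose sg i := proj1_sig (constructive_indefinite_description _ (sig_ex i)).
have sgP i : forall s, Y i s -> Y (sg i) (f s).
  by rewrite /sg; case: constructive_indefinite_description.
have itP : forall m i s, Y i s -> Y (iter m sg i) (iter m f s).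
  by elim=> [//|m IH] i s /IH /= /sgP.
case: (cover x) => i0 Yx.
have noninj : ~ injective (fun a : 'I_r.+1 => iter a sg i0).
  move/leq_card; rewrite !card_ord; by rewrite ltnn.
have [a [b [ab eab]]] : exists a b, (a < b)%N /\ iter a sg i0 = iter b sg i0.
  apply: NNPP => h; apply: noninj => u v e.
  apply: val_inj; case: (ltngtP u v) => // [uv|vu]; exfalso; apply: h.
    by exists u, v.
  by exists v, u.
pose p := (b - a)%N.
have per1 : forall c, iter (c + b) sg i0 = iter (c + a) sg i0 by move=> c; rewrite !iterD eab.
have per : forall t c, iter (a + c + t * p) sg i0 = iter (a + c) sg i0.
  elim=> [|t IH] c; first by rewrite mul0n addn0.
  have -> : (a + c + t.+1 * p = (c + t * p) + b)%N by rewrite /p; lia.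
  rewrite per1; have -> : (c + t * p + a = a + c + t * p)%N by lia.
  exact: IH.
pose N := (p * a.+1)%N.
have Npos : (0 < N)%N by rewrite /N muln_gt0 /p subn_gt0 ab.
pose l := iter N.-1 sg i0.
have fixl : iter N sg l = l.
  rewrite /l -iterD.
  have -> : (N + N.-1 = a + (N.-1 - a) + a.+1 * p)%N.
    have : (a.+1 <= N)%N by rewrite /N leq_pmull // /p subn_gt0.
    rewrite /N mulnC; lia.
  rewrite per; congr iter; have : (a.+1 <= N)%N by rewrite /N leq_pmull // /p subn_gt0.
  lia.
have Yl : forall j, (0 < j)%N -> Y l (spow mu x (N * j)).
  elim=> // j IH _; case: (posnP j) => [->|jpos].
    rewrite muln1 /spow; exact: itP.
  have -> : (N * j.+1 = (N + (N * j).-1).+1)%N.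
    have : (0 < N * j)%N by rewrite muln_gt0 Npos.
    rewrite mulnS; lia.
  rewrite spowE iterD -spowE prednK //; last by rewrite muln_gt0 Npos.
  by have := itP N l _ (IH jpos); rewrite fixl.
have allY : forall s, Y l s.
  move=> s; apply: (Hx N Npos s) => //; first by case: (HY l).
  by move=> t [j j0 ->]; apply: Yl.
case: (HY l) => _ irrl.
case: (irrl C1 C2 C1c C2c (fun s _ => cov s)) => h; [left|right] => s; exact: h.
Qed.
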